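(* For every $\epsilon_1,\epsilon_2>0$ there exists $\delta>0$ such that every $(d-1)$-dimensional simplicial complex $\Gamma$ with $n$ vertices satisfying $\mathrm{gr}_1(\Gamma)>4$ and $d<\delta n$ contains at most $\epsilon_1 n$ vertices of degree at least $\epsilon_2 n$.
   Context: A simplicial complex $\Gamma$ on a finite vertex set $V=V(\Gamma)$ is a family of subsets of $V$ (faces) closed under taking subsets; its dimension is $\max\{|F|:F\in\Gamma\}-1$. The degree of a vertex $v$ is the number of 2-element faces (edges) containing $v$. For $W\subseteq V$, $\Gamma[W]=\{F\in\Gamma:F\subseteq W\}$. For a face $F$ (possibly empty), $\mathrm{lk}_\Gamma(F)=\{G\setminus F: F\subseteq G\in\Gamma\}$. Fix a field $\mathbf{k}$; $\tilde H_i(\cdot;\mathbf{k})$ is reduced simplicial homology. The $1$-girth is $\mathrm{gr}_{1}(\Gamma)=\min\{|W|: W\subseteq V(\Gamma),\ \tilde H_{1}(\mathrm{lk}_\Gamma(F)[W];\mathbf{k})\neq 0 \text{ for some face } F\in\Gamma \text{ (including } F=\emptyset)\}$, or $\infty$ if none exists. *)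

(* Defs.v *)
From HB Require Import structures.
From mathcomp Require Import all_boot all_order all_algebra.
Set Implicit Arguments. Unset Strict Implicit. Unset Printing Implicit Defensive.
Import Order.TTheory GRing.Theory Num.Theory.

(* A simplicial complex on the finite vertex set T: a nonempty family of
   subsets of T closed under subsets, in which every element of T is a
   vertex (so V(G) = T and n = #|T|). *)
Definition is_complex (T : finType) (G : {set {set T}}) : Prop :=
  set0 \in G /\
  (forall v : T, [set v] \in G) /\
  (forall F H : {set T}, F \in G -> H \subset F -> H \in G).

(* G has dimension d-1, i.e. the maximal face size is d. *)
Definition has_dim_plus1 (T : finType) (G : {set {set T}}) (d : nat) : Prop :=
  (exists2 F, F \in G & #|F| = d) /\ (forall F, F \in G -> #|F| <= d).

Definition degree (T : finType) (G : {set {set T}}) (v : T) : nat :=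
  #|[set F in G | (#|F| == 2) && (v \in F)]|.

Definition induced (T : finType) (G : {set {set T}}) (W : {set T}) : {set {set T}} :=
  [set F in G | F \subset W].

Definition link (T : finType) (G : {set {set T}}) (F : {set T}) : {set {set T}} :=
  [set H :\: F | H in [set H in G | F \subset H]].

(* Oriented simplicial boundary map from i-faces (size i+1) to (i-1)-faces
   (size i) of G, with orientation induced by the enumeration order of T.
   It is written as a square matrix indexed by all subsets of T (acting on
   row vectors); rows / columns not corresponding to faces of the right
   size are zero.  The entry for tau = sigma \ {x} is (-1)^(position of x
   in sigma). *)
Definition bsign (K : fieldType) (T : finType) (sigma tau : {set T}) : K :=
  \sum_(x in sigma :\: tau)
     ((-1) ^+ #|[set y in sigma | (nat_of_ord (enum_rank y) < enum_rank x)%N]|)%R.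

Definition boundary (K : fieldType) (T : finType) (G : {set {set T}}) (i : nat)
  : 'M[K]_(#|{set T}|) :=
  \matrix_(a < #|{set T}|, b < #|{set T}|)
    (let sigma : {set T} := enum_val a in let tau : {set T} := enum_val b in
     if [&& sigma \in G, #|sigma| == i.+1, tau \subset sigma & #|tau| == i]
     then bsign K sigma tau else 0%R).

Definition nfaces (T : finType) (G : {set {set T}}) (i : nat) : nat :=
  #|[set F in G | #|F| == i.+1]|.

(* dim_K of reduced homology H~_i(G; K) = dim ker d_i - dim im d_{i+1}
   (the augmentation d_0 maps vertices to the empty face). *)
Definition rbetti (K : fieldType) (T : finType) (G : {set {set T}}) (i : nat) : nat :=
  (nfaces G i - \rank (boundary K G i)) - \rank (boundary K G i.+1).

(* gr_1(G) > m : every W with H~_1(lk_G(F)[W]; K) <> 0 for some face F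
   (including the empty face) has more than m elements. *)
Definition gr1_gt (K : fieldType) (T : finType) (G : {set {set T}}) (m : nat) : Prop :=
  forall (F W : {set T}), F \in G ->
    rbetti K (induced (link G F) W) 1 <> 0 -> m < #|W|.

(* Main.v *)
Require Import Defs.
From HB Require Import structures.
From mathcomp Require Import all_boot all_order all_algebra.
From Stdlib Require Import Lia.

Module MW.
Set Implicit Arguments. Unset Strict Implicit. Unset Printing Implicit Defensive.
Import Order.TTheory GRing.Theory Num.Theory.
Local Open Scope ring_scope.

Lemma bsign_edge (K : fieldType) (T : finType) (x y : T) : x != y ->
  bsign K [set x; y] [set x] = (-1) ^+ (enum_rank x < enum_rank y)%N.
Proof.
move=> xy; rewrite /bsign.
have -> : [set x; y] :\: [set x] = [set y].
  apply/setP => z; rewrite !inE; case: (eqVneq z y) => [->|]; first by rewrite orbT andbT eq_sym xy.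
  by move=> _; rewrite orbF; case: (z == x).
rewrite big_set1; congr (_ ^+ _).
have -> : [set y0 in [set x; y] | (enum_rank y0 < enum_rank y)%N] =
          if (enum_rank x < enum_rank y)%N then [set x] else set0.
  apply/setP => z; rewrite !inE.
  case: (eqVneq z x) => [->|zx] /=; first by case: ifP; rewrite ?inE ?eqxx.
  case: (eqVneq z y) => [->|zy] /=; rewrite ?ltnn; case: ifP; rewrite ?inE // => _.
  - by rewrite eq_sym (negbTE xy).
  - by rewrite (negbTE zx).
by case: ifP; rewrite ?cards1 ?cards0.
Qed.
Lemma rank_ker (K : fieldType) N (A : 'M[K]_N) (S : {set 'I_N}) j0 :
  j0 \in S -> (forall i j, j \notin S -> A i j = 0%R) ->
  (forall i, (\sum_(j in S) A i j = 0)%R) -> (\rank A <= #|S|.-1)%N.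
Proof.
move=> j0S Az Asum.
set S' := S :\ j0.
pose X : 'M[K]_(N, #|S'|) := \matrix_(i, k) A i (enum_val k).
pose Y : 'M[K]_(#|S'|, N) := \matrix_(k, j) ((j == enum_val k)%:R - (j == j0)%:R)%R.
have -> : A = (X *m Y)%R.
  apply/matrixP => i j; rewrite !mxE.
  under eq_bigr do rewrite !mxE.
  rewrite -(big_enum_val (A := mem S') (fun l => A i l * ((j == l)%:R - (j == j0)%:R)))%R.
  under eq_bigr do rewrite mulrBr.
  rewrite sumrB -mulr_suml.
  have hS : (\sum_(l in S') A i l = - A i j0)%R.
    by apply/eqP; rewrite -addr_eq0 addrC -big_setD1 //= Asum.
  rewrite hS.
  have -> : (\sum_(l in S') A i l * (j == l)%:R = if j \in S' then A i j else 0)%R.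
    case: ifP => jS.
      rewrite (big_setD1 j) //= eqxx mulr1 big1 ?addr0 // => l /setD1P [lj _].
      by rewrite eq_sym (negbTE lj) mulr0.
    rewrite big1 // => l lS; case: eqP => [jl|]; last by rewrite mulr0.
    by rewrite jl lS in jS.
  case: (eqVneq j j0) => [->|jj0].
    by rewrite /S' !inE eqxx /= mulr1 sub0r opprK.
  rewrite mulr0 subr0 /S' !inE jj0 /=.
  by case: ifP => // jS; rewrite Az // jS.
apply: leq_trans (mxrankM_maxl _ _) _.
apply: leq_trans (rank_leq_col _) _.
by rewrite /S' (cardsD1 j0 S) j0S.
Qed.

Lemma rbetti1_ne0 (K : fieldType) (T : finType) (X : {set {set T}}) (W : {set T}) :
  (forall P, P \in X -> P \subset W) -> (forall P, P \in X -> #|P| != 3%N) ->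
  (0 < #|W|)%N -> (#|W| <= nfaces X 1)%N -> rbetti K X 1 != 0%N.
Proof.
move=> XW X3 W0 WX.
have B2 : boundary K X 2 = 0.
  apply/matrixP => a b; rewrite !mxE.
  by cbv zeta; case: ifP => // /and4P [h /eqP h3 _ _]; move: (X3 _ h); rewrite h3.
rewrite /rbetti B2 mxrank0 subn0.
set S := [set enum_rank F | F in [set [set w] | w in W]].
have cS : #|S| = #|W|.
  by rewrite card_imset; [rewrite card_imset //; apply: set1_inj | apply: enum_rank_inj].
have [w0 w0W] : exists w0, w0 \in W by apply/set0Pn; rewrite -card_gt0.
have rk : (\rank (boundary K X 1) <= #|S|.-1)%N.
  apply: (@rank_ker _ _ _ S (enum_rank [set w0])).
  - by apply: imset_f; apply: imset_f.
  - move=> a b bS; rewrite mxE; cbv zeta.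
    case: ifP => // /and4P [sX _ tsub /cards1P [w tw]].
    case/negP: bS; rewrite -(enum_valK b) tw; apply: imset_f; apply: imset_f.
    by apply: (subsetP (XW _ sX)); apply: (subsetP tsub); rewrite tw set11.
  - move=> a.
    rewrite big_imset /=; last by move=> ? ? _ _; apply: enum_rank_inj.
    rewrite big_imset /=; last by move=> ? ? _ _; apply: set1_inj.
    under eq_bigr do rewrite mxE enum_rankK.
    cbv zeta.
    case: (boolP (enum_val a \in X)) => sX /=; last by rewrite big1.
    case: (boolP (#|enum_val a| == 2%N)) => /= s2; last by rewrite big1.
    set sig := enum_val a in sX s2 *.
    rewrite -big_mkcondr /=.
    have -> : \sum_(i in W | [&& [set i] \subset sig & #|[set i]| == 1%N]) bsign K sig [set i]
              = \sum_(i in sig) bsign K sig [set i].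
      apply: eq_bigl => i; rewrite sub1set cards1 eqxx andbT.
      by apply/andP/idP => [[]//|iS]; split=> //; apply: (subsetP (XW _ sX)).
    case/cards2P: s2 => x [y [xy ->]].
    rewrite big_setU1 /=; last by rewrite inE.
    rewrite big_set1 bsign_edge // setUC bsign_edge 1?eq_sym //.
    case: (ltngtP (enum_rank x) (enum_rank y)) => [h|h|h].
    + by rewrite /= expr1 expr0 addNr.
    + by rewrite /= expr1 expr0 addrN.
    + by move/ord_inj/enum_rank_inj: h => h; rewrite h eqxx in xy.
rewrite cS in rk.
apply: lt0n_neq0; rewrite subn_gt0.
apply: leq_trans WX; apply: leq_ltn_trans rk _.
by rewrite prednK.
Qed.

End MW.
Import MW.

Module ML.
Set Implicit Arguments. Unset Strict Implicit. Unset Printing Implicit Defensive.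
Import Order.TTheory GRing.Theory Num.Theory.

Lemma link_mem (T : finType) (G : {set {set T}}) (F P : {set T}) :
  (forall z, z \in P -> z \notin F) -> (P \in link G F) = (P :|: F \in G).
Proof.
move=> dPF; apply/imsetP/idP => [[H] | PG].
  rewrite inE => /andP [HG FH] ->.
  have -> : H :\: F :|: F = H.
    apply/setP => z; rewrite !inE; case: (boolP (z \in F)) => zF /=; rewrite ?orbF ?orbT //.
    by rewrite (subsetP FH).
  exact: HG.
exists (P :|: F); first by rewrite inE PG subsetUr.
apply/setP => z; rewrite !inE; case: (boolP (z \in F)) => zF /=; last by rewrite orbF.
apply: negbTE; apply/negP => zP.
by move: (dPF z zP); rewrite zF.
Qed.

Lemma nfaces_ge (T : finType) (X : {set {set T}}) (s : seq {set T}) :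
  uniq s -> (forall P, P \in s -> (P \in X) && (#|P| == 2)) -> size s <= nfaces X 1.
Proof.
move=> us sX; rewrite /nfaces -(card_uniqP us).
apply: subset_leq_card; apply/subsetP => P Ps; rewrite inE; exact: sX.
Qed.

Lemma cards3 (T : finType) (a b c : T) : a != b -> a != c -> b != c -> #|[set a; b; c]| = 3.
Proof.
move=> ab ac bc.
rewrite -setUA cardsU1 !inE (negbTE ab) (negbTE ac) /= cards2 bc.
done.
Qed.

Section G.
Variables (K : fieldType) (T : finType) (G : {set {set T}}).
Hypothesis gr : gr1_gt K G 4.
Hypothesis cG : is_complex G.

Lemma ind_mem F W P : P \in induced (link G F) W = (P \in link G F) && (P \subset W).
Proof. by rewrite inE. Qed.

Lemma triangle F a b c : F \in G -> a != b -> a != c -> b != c ->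
  a \notin F -> b \notin F -> c \notin F ->
  [set a; b] :|: F \in G -> [set a; c] :|: F \in G -> [set b; c] :|: F \in G ->
  [set a; b; c] :|: F \in G.
Proof.
move=> FG ab ac bc aF bF cF abG acG bcG.
set W := [set a; b; c].
have dW : forall P : {set T}, P \subset W -> (forall z, z \in P -> z \notin F).
  move=> P PW z zP; apply/negP => zF.
  move: (subsetP PW z zP); rewrite !inE -orbA => /or3P [] /eqP zz; subst z.
  - by rewrite zF in aF.
  - by rewrite zF in bF.
  - by rewrite zF in cF.
have W3 : #|W| = 3 by apply: cards3.
apply/negPn/negP => nW.
suff /eqP /(gr FG) : rbetti K (induced (link G F) W) 1 != 0%N by rewrite W3.
apply: (@rbetti1_ne0 _ _ _ W).
- by move=> P; rewrite ind_mem => /andP [].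
- move=> P; rewrite ind_mem => /andP [PL PW]; apply/negP => /eqP P3.
  have PeW : P = W by apply/eqP; rewrite eqEcard PW W3 P3.
  move: PL; rewrite PeW link_mem; last exact: dW.
  by move=> h; rewrite h in nW.
- by rewrite W3.
- rewrite W3; apply: (@nfaces_ge _ _ [:: [set a; b]; [set a; c]; [set b; c]]).
    rewrite /= !inE andbT; apply/andP; split.
    + apply/negP => /orP [] /eqP /setP.
        by move/(_ b); rewrite !inE eqxx orbT (eq_sym b a) (negbTE ab) (negbTE bc).
      by move/(_ a); rewrite !inE eqxx (negbTE ab) (negbTE ac).
    + apply/negP => /eqP /setP /(_ a); rewrite !inE eqxx /=.
      by rewrite (negbTE ab) (negbTE ac).
  have sW : forall x y, x \in W -> y \in W -> [set x; y] \subset W.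
    by move=> x y xW yW; apply/subsetP => z; rewrite in_set2 => /orP [] /eqP ->.
  have eX : forall x y, x != y -> x \in W -> y \in W -> [set x; y] :|: F \in G ->
      ([set x; y] \in induced (link G F) W) && (#|[set x; y]| == 2).
    move=> x y xy xW yW h; rewrite ind_mem cards2 xy sW // !andbT link_mem //.
    by apply: dW; exact: sW.
  move=> P; rewrite !in_cons in_nil orbF => /or3P [] /eqP ->; apply: eX; rewrite ?inE ?eqxx ?orbT //.
Qed.
Lemma set2_neq (a b c d w : T) : w \in [set a; b] -> w \notin [set c; d] -> [set a; b] != [set c; d].
Proof. by move=> h1 h2; apply/negP => /eqP E; rewrite E in h1; rewrite h1 in h2. Qed.

Lemma card_miss2 (W P : {set T}) p q : p \in W -> q \in W -> p != q -> p \notin P -> q \notin P ->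
  P \subset W -> #|P| <= #|W| - 2.
Proof.
move=> pW qW pq pP qP PW.
have -> : #|W| - 2 = #|W :\ p :\ q|.
  rewrite (cardsD1 p W) pW (cardsD1 q (W :\ p)) !inE eq_sym pq qW /=.
  by rewrite add1n add1n subSS subSS subn0.
apply: subset_leq_card; apply/subsetP => z zP; rewrite !inE (subsetP PW) // andbT.
apply/andP; split; apply/negP => /eqP E; subst z.
- by rewrite zP in qP.
- by rewrite zP in pP.
Qed.

Lemma c4 u x v y : u != x -> u != v -> u != y -> x != v -> x != y -> v != y ->
  [set u; x] \in G -> [set x; v] \in G -> [set v; y] \in G -> [set y; u] \in G ->
  [set u; v] \notin G -> [set x; y] \in G.
Proof.
move=> ux uv uy xv xy vy uxG xvG vyG yuG uvG.
have [G0 [_ Gdown]] := cG.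
have xu : x != u by rewrite eq_sym. have vu : v != u by rewrite eq_sym.
have yu : y != u by rewrite eq_sym. have vx : v != x by rewrite eq_sym.
have yx : y != x by rewrite eq_sym. have yv : y != v by rewrite eq_sym.
pose E := (negbTE ux, negbTE uv, negbTE uy, negbTE xv, negbTE xy, negbTE vy,
           negbTE xu, negbTE vu, negbTE yu, negbTE vx, negbTE yx, negbTE yv).
set W := [set u; x; v; y].
have W4 : #|W| = 4.
  rewrite /W -!setUA cardsU1 cardsU1 cards2 !inE !E /=.
  by [].
have lm : forall P, (P \in link G set0) = (P \in G).
  by move=> P; rewrite link_mem ?setU0 // => z _; rewrite inE.
apply/negPn/negP => nxy.
suff /eqP /(gr G0) : rbetti K (induced (link G set0) W) 1 != 0%N by rewrite W4.
have sW : forall a b, a \in W -> b \in W -> [set a; b] \subset W.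
  by move=> a b aW bW; apply/subsetP => z; rewrite in_set2 => /orP [] /eqP ->.
have inW : [/\ u \in W, x \in W, v \in W & y \in W] by rewrite !inE !eqxx ?orbT.
case: inW => uW xW vW yW.
have sW' : forall (P : {set T}) a b, a \in P -> b \in P -> [set a; b] \subset P.
  by move=> P a b aW bW; apply/subsetP => z; rewrite in_set2 => /orP [] /eqP ->.
apply: (@rbetti1_ne0 _ _ _ W).
- by move=> P; rewrite ind_mem => /andP [].
- move=> P; rewrite ind_mem lm => /andP [PG PW]; apply/negP => /eqP P3.
  case: (boolP ((u \in P) && (v \in P))) => [/andP [uP vP]|nuv].
    by move: (Gdown _ _ PG (sW' _ _ _ uP vP)) => h; rewrite h in uvG.
  case: (boolP ((x \in P) && (y \in P))) => [/andP [xP yP]|nxy'].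
    by move: (Gdown _ _ PG (sW' _ _ _ xP yP)) => h; rewrite h in nxy.
  have : #|P| <= #|W| - 2.
    move: nuv nxy'; rewrite !negb_and => /orP [] h1 /orP [] h2.
    + by apply: (card_miss2 uW xW).
    + by apply: (card_miss2 uW yW).
    + by apply: (card_miss2 vW xW).
    + by apply: (card_miss2 vW yW).
  by rewrite P3 W4.
- by rewrite W4.
- rewrite W4; apply: (@nfaces_ge _ _ [:: [set u; x]; [set x; v]; [set v; y]; [set y; u]]).
    rewrite /= !in_cons in_nil !orbF andbT.
    rewrite !negb_or.
    apply/and3P; split; [apply/and3P; split | apply/andP; split | ].
    1-6: first [ by apply: (set2_neq (w := u)); rewrite !inE ?eqxx ?E ?orbT /=
               | by apply: (set2_neq (w := x)); rewrite !inE ?eqxx ?E ?orbT /=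
               | by apply: (set2_neq (w := v)); rewrite !inE ?eqxx ?E ?orbT /= ].
  have eX : forall a b, a != b -> a \in W -> b \in W -> [set a; b] \in G ->
      ([set a; b] \in induced (link G set0) W) && (#|[set a; b]| == 2).
    by move=> a b ab aW bW h; rewrite ind_mem cards2 ab sW // !andbT lm.
  move=> P; rewrite !in_cons in_nil orbF => /or4P [] /eqP ->; apply: eX => //.
Qed.
Definition clique (C : {set T}) :=
  forall a b, a \in C -> b \in C -> a != b -> [set a; b] \in G.

Lemma flag C : clique C -> C \in G.
Proof.
have [G0 [G1 Gdown]] := cG.
elim: {C}_.+1 {-2}C (ltnSn #|C|) => // m IH C Cm cl.
have IH' : forall D : {set T}, D \subset C -> D != C -> D \in G.
  move=> D DC DnC; apply: IH.
    apply: (@leq_trans #|C|); last by rewrite -ltnS.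
    by apply: proper_card; rewrite properEneq DnC.
  by move=> a b aD bD; apply: cl; apply: (subsetP DC).
case Ec: #|C| => [|[|[|k]]].
- by move/cards0_eq: Ec => ->.
- by move/eqP/cards1P: Ec => [a ->].
- move/eqP/cards2P: Ec => [a [b [ab Cab]]].
  by rewrite Cab; apply: cl => //; rewrite Cab !inE eqxx ?orbT.
have [a aC] : exists a, a \in C by apply/set0Pn; rewrite -card_gt0 Ec.
have [b bC] : exists b, b \in C :\ a.
  by apply/set0Pn; rewrite -card_gt0; move: Ec; rewrite (cardsD1 a C) aC add1n => [[->]].
have [c cC] : exists c, c \in C :\ a :\ b.
  apply/set0Pn; rewrite -card_gt0; move: Ec; rewrite (cardsD1 a C) aC add1n => [[]].
  by rewrite (cardsD1 b (C :\ a)) bC add1n => [[->]].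
move: bC cC; rewrite !inE => /andP [ba bC] /andP [cb /andP [ca cC]].
have IH2 : forall (D : {set T}) z, D \subset C -> z \in C -> z \notin D -> D \in G.
  move=> D z DC zC zD; apply: IH' => //; apply/negP => /eqP E.
  by rewrite E zC in zD.
set S3 := [set a; b; c].
set F := C :\: S3.
have S3C : S3 \subset C.
  by apply/subsetP => z; rewrite !inE -orbA => /or3P [] /eqP ->.
have -> : C = S3 :|: F.
  apply/setP => z; rewrite in_setU in_setD; case: (boolP (z \in S3)) => zS //=.
  by rewrite (subsetP S3C).
have nF : forall z, z \in S3 -> z \notin F by move=> z zS; rewrite inE zS.
have inS : [/\ a \in S3, b \in S3 & c \in S3] by rewrite !inE !eqxx ?orbT.
case: inS => aS bS cS.
have FC : F \subset C by apply: subsetDl.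
have sub2 : forall x y, x \in C -> y \in C -> [set x; y] :|: F \subset C.
  move=> x y xC yC; apply/subsetP => z; rewrite in_setU in_set2 => /orP [/orP [] /eqP -> //|].
  exact: (subsetP FC).
have nin2 : forall x y w, w \in S3 -> w != x -> w != y -> w \notin [set x; y] :|: F.
  by move=> x y w wS wx wy; rewrite in_setU in_set2 (negbTE wx) (negbTE wy) /= nF.
apply: triangle => //.
- by apply: (IH2 F a) => //; rewrite nF.
- by rewrite eq_sym.
- by rewrite eq_sym.
- by rewrite eq_sym.
- by rewrite nF.
- by rewrite nF.
- by rewrite nF.
- by apply: (IH2 _ c); rewrite ?sub2 ?nin2.
- by apply: (IH2 _ b); rewrite ?sub2 ?nin2 // eq_sym.
- by apply: (IH2 _ a); rewrite ?sub2 ?nin2 // eq_sym.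
Qed.


End G.

End ML.
Import ML.

Module MC.
Set Implicit Arguments. Unset Strict Implicit. Unset Printing Implicit Defensive.

Lemma card_bigcup_le (T I : finType) (P : pred I) (X : I -> {set T}) :
  #|\bigcup_(i | P i) X i| <= \sum_(i | P i) #|X i|.
Proof.
elim/big_rec2: _ => [|i B n _ IH]; first by rewrite cards0.
by rewrite (leq_trans (leq_card_setU _ _)) // leq_add2l.
Qed.

Section C.
Variables (K : fieldType) (T : finType) (G : {set {set T}}) (d : nat).
Hypothesis gr : gr1_gt K G 4.
Hypothesis cG : is_complex G.
Hypothesis dG : forall F, F \in G -> #|F| <= d.

Definition adj (x y : T) := (x != y) && ([set x; y] \in G).
Definition nb (v : T) := [set w | adj v w].

Lemma adjC x y : adj x y = adj y x.
Proof. by rewrite /adj eq_sym setUC. Qed.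

Lemma degree_nb v : degree G v = #|nb v|.
Proof.
rewrite /degree.
have -> : [set F in G | (#|F| == 2) && (v \in F)] = (fun w => [set v; w]) @: nb v.
  apply/setP => F; rewrite inE; apply/andP/imsetP.
    move=> [FG /andP [/cards2P [a [b [ab Fab]]] vF]].
    rewrite Fab in FG vF *.
    move: vF; rewrite in_set2 => /orP [] /eqP ->.
      by exists b; [rewrite inE /adj ab FG|].
    exists a; last by rewrite setUC.
    by rewrite inE /adj eq_sym ab setUC FG.
  move=> [w]; rewrite inE => /andP [vw vwG] ->; split; first exact: vwG.
  by rewrite cards2 vw in_set2 eqxx.
apply: card_in_imset => w1 w2; rewrite !inE => /andP [v1 _] _ /setP /(_ w1).
rewrite !in_set2 eqxx orbT eq_sym (negbTE v1) /=.
by move/esym/eqP.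
Qed.
Lemma clique_le C : clique G C -> #|C| <= d.
Proof. by move=> cl; apply: dG; exact: (flag gr cG cl). Qed.

Lemma common_clique u v : u != v -> ~~ adj u v -> clique G (nb u :&: nb v).
Proof.
move=> uv nuv x y; rewrite !inE => /andP [ux vx] /andP [uy vy] xy.
move: ux vx uy vy; rewrite /adj => /andP [ux uxG] /andP [vx vxG] /andP [uy uyG] /andP [vy vyG].
apply: (c4 gr cG ux uv uy).
- by rewrite eq_sym.
- exact: xy.
- exact: vy.
- exact: uxG.
- by rewrite setUC.
- exact: vyG.
- by rewrite setUC.
- by move: nuv; rewrite /adj uv.
Qed.
Lemma card_sum (A : {set T}) : #|A| = \sum_x (x \in A : nat).
Proof. by rewrite -sum1_card big_mkcond /=; apply: eq_bigr => x _; case: (x \in A). Qed.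

Lemma m_le (m P : nat) : m * m = m + P -> m <= 1 + P.
Proof. move=> h; apply/leP; move: h; rewrite -!plusE -!multE => h; nia. Qed.

Lemma sum_nb_le (J : {set T}) :
  (forall u v, u \in J -> v \in J -> u != v -> #|nb u :&: nb v| <= d) ->
  \sum_(u in J) #|nb u| <= #|T| + #|J| * (#|J| * d).
Proof.
move=> hd.
pose f x u := nat_of_bool (x \in nb u).
have E1 : \sum_(u in J) #|nb u| = \sum_x \sum_(u in J) f x u.
  rewrite exchange_big /=; apply: eq_bigr => u _; exact: card_sum.
rewrite E1.
pose Px x := \sum_(u in J) \sum_(v in J | v != u) f x u * f x v.
have key : forall x, \sum_(u in J) f x u <= 1 + Px x.
  move=> x; apply: m_le.
  rewrite big_distrl /= -big_split /=; apply: eq_bigr => u uJ.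
  rewrite big_distrr /= (bigD1 u uJ) /=; congr (_ + _).
  by rewrite /f; case: (x \in nb u).
apply: (@leq_trans (\sum_x (1 + Px x))); first by apply: leq_sum => x _; apply: key.
rewrite big_split /= sum1_card cardT -cardE leq_add2l.
rewrite /Px exchange_big /=.
apply: (@leq_trans (\sum_(u in J) (#|J| * d))); last by rewrite sum_nat_const.
apply: leq_sum => u uJ; rewrite exchange_big /=.
apply: (@leq_trans (\sum_(v in J | v != u) d)).
  apply: leq_sum => v /andP [vJ vu].
  have -> : \sum_x f x u * f x v = \sum_x (x \in nb u :&: nb v : nat).
    by apply: eq_bigr => x _; rewrite inE /f mulnb.
  rewrite -card_sum; apply: hd => //; by rewrite eq_sym.
rewrite -sum_nat_const (bigD1 u uJ) /=; exact: leq_addl.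
Qed.
Definition indep (J : {set T}) := [forall u in J, [forall v in J, (u != v) ==> ~~ adj u v]].

Lemma indepP (J : {set T}) : reflect (forall u v, u \in J -> v \in J -> u != v -> ~~ adj u v) (indep J).
Proof.
apply: (iffP forall_inP) => [h u v uJ vJ uv | h u uJ].
  by move/forall_inP: (h u uJ) => /(_ v vJ) /implyP; apply.
by apply/forall_inP => v vJ; apply/implyP; apply: h.
Qed.

Lemma indep_sub (J J' : {set T}) : J' \subset J -> indep J -> indep J'.
Proof.
move=> sJ /indepP h; apply/indepP => u v uJ vJ; apply: h; exact: (subsetP sJ).
Qed.

Lemma indep_add x (J : {set T}) : indep J -> (forall w, w \in J -> w != x -> ~~ adj w x) -> indep (x |: J).
Proof.
move=> /indepP h hx; apply/indepP => p q; rewrite !in_setU1.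
case: (eqVneq p x) => [->|px] /=; case: (eqVneq q x) => [->|qx] /=.
- by [].
- by move=> _ qJ _; rewrite adjC; apply: hx.
- by move=> pJ _ _; apply: hx.
- by move=> pJ qJ; apply: h.
Qed.

Lemma cover (A : {set T}) : exists I : {set T},
  [/\ I \subset A, indep I, (forall J : {set T}, J \subset A -> indep J -> #|J| <= #|I|) &
      #|A| <= #|I| + #|I| * d + #|I| * (#|I| * d)].
Proof.
have P0 : (set0 \subset A) && indep set0.
  by rewrite sub0set; apply/indepP => u v; rewrite inE.
case: (@arg_maxnP _ set0 (fun J => (J \subset A) && indep J) (fun J => #|J|) P0).
move=> I /andP [IA iI] Imax.
exists I; split => //; first by move=> J JA iJ; apply: Imax; rewrite JA iJ.
pose B u := [set y in A | (y \notin I) && ([set w in I | adj w y] == [set u])].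
have Bnadj : forall u y w, y \in B u -> w \in I -> w != u -> ~~ adj w y.
  move=> u y w; rewrite inE => /and3P [_ _ /eqP /setP /(_ w)].
  by rewrite !inE => h wI wu; apply/negP => awy; rewrite wI awy (negbTE wu) in h.
have Bcl : forall u, u \in I -> clique G (B u).
  move=> u uI y z yB zB yz; apply/negPn/negP => nyz.
  have nadj : ~~ adj y z by rewrite /adj yz (negbTE nyz).
  have yA : y \in A by move: yB; rewrite inE => /andP [].
  have zA : z \in A by move: zB; rewrite inE => /andP [].
  have yI : y \notin I by move: yB; rewrite inE => /and3P [].
  have zI : z \notin I by move: zB; rewrite inE => /and3P [].
  pose J := y |: (z |: (I :\ u)).
  have JA : J \subset A.
    apply/subsetP => p; rewrite /J !in_setU1 in_setD1.
    case/orP => [/eqP -> | /orP [/eqP -> | /andP [_ pI]]]; [exact: yA | exact: zA |].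
    exact: (subsetP IA).
  have iJ : indep J.
    apply: indep_add; first apply: indep_add.
    - exact: (indep_sub (subsetDl I [set u]) iI).
    - by move=> w; rewrite in_setD1 => /andP [wu wI] _; exact: (Bnadj _ _ _ zB wI wu).
    - move=> w; rewrite in_setU1 in_setD1 => /orP [/eqP -> | /andP [wu wI]] wy.
        by rewrite adjC.
      exact: (Bnadj _ _ _ yB wI wu).
  have : #|J| <= #|I| by apply: Imax; rewrite JA iJ.
  rewrite /J cardsU1 cardsU1 in_setU1 !in_setD1 (negbTE yz) (negbTE yI) (negbTE zI) /= !andbF /=.
  by rewrite (cardsD1 u I) uI add1n !add1n ltnn.
have cov : A \subset I :|: (\bigcup_(u in I) B u) :|: (\bigcup_(u in I) \bigcup_(v in I | v != u) (nb u :&: nb v)).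
  apply/subsetP => x xA.
  case: (boolP (x \in I)) => xI; first by rewrite !in_setU xI.
  set S := [set w in I | adj w x].
  case: (set_0Vmem S) => [S0 | [u uS]].
    have iJ : indep (x |: I).
      apply: indep_add => // w wI _; apply/negP => awx.
      have : w \in S by rewrite inE wI awx.
      by rewrite S0 inE.
    have : #|x |: I| <= #|I|.
      apply: Imax; rewrite iJ andbT; apply/subsetP => p; rewrite in_setU1.
      by case/orP => [/eqP -> // | pI]; exact: (subsetP IA).
    by rewrite cardsU1 xI add1n ltnn.
  have uI : u \in I by move: uS; rewrite inE => /andP [].
  case: (boolP (S == [set u])) => Su.
    rewrite !in_setU; apply/orP; left; apply/orP; right.
    by apply/bigcupP; exists u => //; rewrite inE xA xI Su.
  have [v vS] : exists v, v \in S :\ u.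
    apply/set0Pn; apply/negP => /eqP E; move/negP: Su; apply.
    by rewrite -(setD1K uS) E setU0.
  move: vS; rewrite in_setD1 inE => /andP [vu /andP [vI avx]].
  move: uS; rewrite inE => /andP [_ aux].
  rewrite !in_setU; apply/orP; right.
  apply/bigcupP; exists u => //; apply/bigcupP; exists v; first by rewrite vI vu.
  by rewrite inE !inE aux avx.
apply: leq_trans (subset_leq_card cov) _.
apply: leq_trans (leq_card_setU _ _) _; rewrite leq_add //.
  apply: leq_trans (leq_card_setU _ _) _; rewrite leq_add2l.
  apply: leq_trans (card_bigcup_le _ _) _.
  rewrite -sum_nat_const; apply: leq_sum => u uI; apply: clique_le; exact: Bcl.
apply: leq_trans (card_bigcup_le _ _) _.
rewrite -sum_nat_const; apply: leq_sum => u uI.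
apply: leq_trans (card_bigcup_le _ _) _.
rewrite -sum_nat_const (bigD1 u uI) /=; apply: leq_trans (leq_addl d _).
apply: leq_sum => v /andP [vI vu]; apply: clique_le; apply: common_clique.
  by rewrite eq_sym.
by move/indepP: iI; apply => //; rewrite eq_sym.
Qed.
Lemma sub_card (J : {set T}) k : k <= #|J| -> exists2 J' : {set T}, J' \subset J & #|J'| = k.
Proof.
move=> kJ; have [m Em] : exists m, #|J| = k + m by exists (#|J| - k); rewrite subnKC.
elim: m J Em {kJ} => [|m IH] J Em; first by exists J; rewrite ?Em ?addn0.
have [x xJ] : exists x, x \in J by apply/set0Pn; rewrite -card_gt0 Em addnS.
have cx : #|J :\ x| = k + m.
  by move: Em; rewrite (cardsD1 x J) xJ addnS add1n => [[]].
have [J' J'J cJ'] := IH (J :\ x) cx.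
by exists J' => //; apply: (subset_trans J'J); apply: subsetDl.
Qed.

Lemma core (A : {set T}) k :
  (forall J : {set T}, J \subset A -> indep J -> #|J| = k ->
     #|T| + k * (k * d) < \sum_(u in J) #|nb u|) ->
  #|A| <= k + k * d + k * (k * d).
Proof.
move=> hJ; have [I [IA iI Imax cA]] := cover A.
case: (ltnP #|I| k) => Ik.
  apply: leq_trans cA _; have Ik' := ltnW Ik.
  by rewrite !leq_add ?leq_mul.
have [J JI cJ] := sub_card Ik.
have iJ : indep J by apply: indep_sub iI.
have := hJ J (subset_trans JI IA) iJ cJ.
rewrite ltnNge -cJ sum_nb_le //.
move=> u v uJ vJ uv; apply: clique_le; apply: common_clique => //.
by move/indepP: iJ; apply.
Qed.
End C.

End MC.
Import MC.

Unset Implicit Arguments. Set Strict Implicit. Set Printing Implicit Defensive.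
Import Order.TTheory GRing.Theory Num.Theory.
Local Open Scope ring_scope.

Theorem mainTheorem6 (K : fieldType) (R : realFieldType) (e1 e2 : R) :
  0 < e1 -> 0 < e2 ->
  exists2 delta : R, 0 < delta &
    forall (T : finType) (G : {set {set T}}) (d : nat),
      is_complex G -> has_dim_plus1 G d ->
      gr1_gt K G 4 ->
      d%:R < delta * #|T|%:R ->
      #|[set v : T | e2 * #|T|%:R <= (degree G v)%:R]|%:R <= e1 * #|T|%:R.
Proof.
move=> e1p e2p.
pose a := Num.min e1 1; pose b := Num.min e2 1.
have a0 : 0 < a by rewrite lt_min e1p ltr01.
have a1 : a <= 1 by rewrite ge_min lexx orbT.
have ae : a <= e1 by rewrite ge_min lexx.
have b0 : 0 < b by rewrite lt_min e2p ltr01.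
have b1 : b <= 1 by rewrite ge_min lexx orbT.
have be : b <= e2 by rewrite ge_min lexx.
exists (a * b * b / 16%:R); first by rewrite divr_gt0 ?mulr_gt0 ?ltr0n.
move=> T G d cG [_ dle] gr hdn.
set n := #|T| in hdn *.
have n0 : (0 < n)%N.
  case: (posnP n) => // n0; move: hdn; rewrite n0 mulr0 ltNge ler0n //.
have /card_gt0P [v0 _] : (0 < #|T|)%N := n0.
have d1 : (1 <= d)%N by move: (dle _ ((cG.2.1) v0)); rewrite cards1.
pose n' : R := n%:R; pose d' : R := d%:R; pose c := a * b * b.
have n'0 : 0 < n' by rewrite ltr0n.
have d'1 : 1 <= d' by rewrite ler1n.
have H16 : d' * 16%:R < c * n'.
  by rewrite -ltr_pdivlMr ?ltr0n // mulrAC.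
have c_bb : c <= b * b.
  rewrite /c -mulrA -{2}(mul1r (b * b)); apply: ler_pM => //; rewrite ?mulr_ge0 ?ltW //.
have bb_b : b * b <= b by have := ler_pM (ltW b0) (ltW b0) (lexx b) b1; rewrite mulr1.
have c_a : c <= a.
  have bb1 : b * b <= 1 by apply: le_trans bb_b b1.
  rewrite /c -mulrA; have := ler_pM (ltW a0) (mulr_ge0 (ltW b0) (ltW b0)) (lexx a) bb1.
  by rewrite mulr1.
have bn : 1 < b * n'.
  have : 16%:R < b * n'.
    have h1 : 16%:R <= d' * 16%:R by rewrite -{1}(mul1r 16%:R); apply: ler_wpM2r; [exact: ler0n | exact: d'1].
    have h2 : c * n' <= b * n' by apply: ler_wpM2r; [exact: ltW | exact: le_trans c_bb bb_b].
    exact: (le_lt_trans h1 (lt_le_trans H16 h2)).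
  by apply: le_lt_trans; rewrite ler1n.
pose P := fun k : nat => 2%:R <= k%:R * b.
have exK : exists k, P k.
  exists (2 * n)%N; rewrite /P natrM mulrAC -/n' -mulrA -{1}(mulr1 2%:R).
  by apply: ler_wpM2l; [exact: ler0n | exact: ltW bn].
case: (ex_minnP exK) => Kn HK Kmin.
pose k : R := Kn%:R.
have Kpos : (0 < Kn)%N.
  case: (posnP Kn) => // K0; move: HK; rewrite /P K0 mul0r.
  by rewrite leNgt ltr0n.
have k0 : 0 < k by rewrite ltr0n.
have kb2 : 2%:R <= k * b := HK.
have kb3 : k * b < 3%:R.
  have [K' EK] : exists K', Kn = K'.+1 by exists Kn.-1; rewrite prednK.
  rewrite /k EK.
  have nP : ~~ P K'.
    by apply/negP => /Kmin; rewrite EK ltnn.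
  rewrite /P -ltNge in nP.
  rewrite -addn1 natrD mulrDl mul1r.
  have -> : 3%:R = 2%:R + 1 :> R by rewrite -natr1.
  by apply: ltr_leD.
have kb0 : 0 <= k * b by rewrite mulr_ge0 // ltW.
have kbkb : (k * b) * (k * b) <= 9%:R.
  have := ler_pM kb0 kb0 (ltW kb3) (ltW kb3).
  by rewrite -natrM.
have R2 : k * (k * d') < n'.
  rewrite -(ltr_pM2r (_ : 0 < 16%:R)) ?ltr0n //.
  have e1' : k * (k * d') * 16%:R = (k * k) * (d' * 16%:R) by rewrite !mulrA.
  rewrite e1'.
  apply: (lt_le_trans (_ : _ < (k * k) * (c * n'))).
    by rewrite ltr_pM2l ?mulr_gt0.
  apply: (le_trans (_ : _ <= (k * k) * (b * b * n'))).
    apply: ler_wpM2l; first by rewrite mulr_ge0 ?ltW.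
    by apply: ler_wpM2r; [exact: ltW | exact: c_bb].
  have -> : k * k * (b * b * n') = (k * b) * (k * b) * n'.
    by rewrite !mulrA [k * k * b]mulrAC.
  apply: (le_trans (_ : _ <= 9%:R * n')).
    by apply: ler_wpM2r; [exact: ltW | exact: kbkb].
  by rewrite mulrC; apply: ler_wpM2l; [exact: ltW | rewrite ler_nat].
pose X : R := k + k + k * k.
have X0 : 0 < X by rewrite /X !addr_gt0 ?mulr_gt0.
have Xbb : X * b * b <= 15%:R.
  rewrite /X !mulrDl.
  have t1 : k * b * b <= 3%:R.
    by have := ler_pM kb0 (ltW b0) (ltW kb3) b1; rewrite mulr1.
  have t2 : k * k * b * b <= 9%:R.
    by rewrite [k * k * b]mulrAC -[k * b * k * b]mulrA.
  have := lerD (lerD t1 t1) t2.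
  by rewrite -!natrD.
have R3 : X * d' < a * n'.
  rewrite -(ltr_pM2r (_ : 0 < 16%:R)) ?ltr0n //.
  rewrite -mulrA.
  apply: (lt_le_trans (_ : _ < X * (c * n'))); first by rewrite ltr_pM2l.
  have -> : X * (c * n') = (X * b * b) * (a * n').
    by rewrite /c !mulrA [X * a * b]mulrAC [X * b * a * b]mulrAC.
  apply: (le_trans (_ : _ <= 15%:R * (a * n'))).
    by apply: ler_wpM2r; [rewrite mulr_ge0 ?ltW | exact: Xbb].
  by rewrite mulrC; apply: ler_wpM2l; [rewrite mulr_ge0 ?ltW | rewrite ler_nat].
pose A' := [set v | b * n' <= (#|nb G v|)%:R].
have dG : forall F, F \in G -> (#|F| <= d)%N := dle.
have cA' := core gr cG dG (A := A') (k := Kn).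
have hA' : (#|A'| <= Kn + Kn * d + Kn * (Kn * d))%N.
  apply: cA' => J JA iJ cJ.
  rewrite -(ltr_nat R) natrD !natrM natr_sum -/n' -/k -/d'.
  apply: (lt_le_trans (_ : _ < n' + n')); first by rewrite ltrD2l.
  apply: (le_trans (_ : _ <= \sum_(u in J) b * n')); last first.
    apply: ler_sum => u uJ; have := subsetP JA u uJ; rewrite inE; exact.
  rewrite sumr_const cJ -mulr_natr -/k.
  have -> : n' + n' = 2%:R * n' by rewrite mulr_natl mulr2n.
  rewrite mulrAC; apply: ler_wpM2r; [exact: ltW | by rewrite mulrC].
have AA' : [set v : T | e2 * n' <= (degree G v)%:R] \subset A'.
  apply/subsetP => v; rewrite !inE degree_nb => h.
  apply: le_trans h; apply: ler_wpM2r; [exact: ltW | exact: be].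
apply: (le_trans (_ : _ <= #|A'|%:R)); first by rewrite ler_nat subset_leq_card.
apply: (le_trans (_ : _ <= (Kn + Kn * d + Kn * (Kn * d))%:R)); first by rewrite ler_nat.
apply: (le_trans (_ : _ <= X * d')); last first.
  apply: (le_trans (ltW R3)); apply: ler_wpM2r; [exact: ltW | exact: ae].
have hn : (Kn + Kn * d + Kn * (Kn * d) <= (Kn + Kn + Kn * Kn) * d)%N.
  apply/ssrnat.leP; move/ssrnat.leP: d1 => d1'; rewrite -!plusE -!multE; nia.
apply: (le_trans (_ : _ <= ((Kn + Kn + Kn * Kn) * d)%:R)); first by rewrite ler_nat.
by rewrite natrM !natrD natrM.
Qed.
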